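(* Let $\gamma\ge1$, $t\ge1$ an integer, $\varepsilon\in(0,1)$, and $B$ with $\gamma t\le B\le|A|$. Let $(x,y,p)$ be a $\gamma t$-SLEO with income distribution $\mathcal{I}$ uniform on $[1-\varepsilon,1]$ and total budget $B$, and let $C\subseteq A$ with $|C|\ge t$ contain every $a\in A$ with $y_a=1$. Then for every $c\in A\setminus C$: (i) $\sum_{v\in V}p_{v,c}\le \gamma t\cdot|V|\cdot\frac1B\cdot\mathbb{E}_{b\sim\mathcal{I}}[b]$; (ii) the number of voters $v$ that are $t$-covered by $C$ and satisfy $c\succ_v^t C$ is at most $\frac{\gamma t}{B(1-\varepsilon)}\cdot|V|$.
   Context: An election $(V,A,\succ)$: finite nonempty voter set $V$, finite candidate set $A$, strict linear order $\succ_v$ on $A$ per voter, extended to $A\cup\{\emptyset\}$ with $\emptyset$ strictly below all candidates. For $C\subseteq A$ with $|C|\ge t$ and $a\in A\setminus C$: $C\succ_v^t a$ iff $|\{c\in C: c\succ_v a\}|\ge t$, otherwise $a\succ_v^t C$. Given prices $p_v\in[0,1]^{A\cup\{\emptyset\}}$ with $p_{v,\emptyset}=0$ and income $b\ge0$, voter $v$'s demand is the $\succ_v$-maximal element of $\{a\in A\cup\{\emptyset\}: p_{v,a}\le b\}$; $\mathcal{D}_v(p_v,\mathcal{I})$ is this demand with $b\sim\mathcal{I}$. For $s>0$, $B>0$, an $s$-SLEO $(x,y,p)$ with income $\mathcal{I}$ and budget $B$: prices $p_v\in[0,1]^{A\cup\{\emptyset\}}$ with $p_{v,\emptyset}=0$,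 consumptions $x_v\in[0,1]^{A\cup\{\emptyset\}}$, and $y\in[0,1]^A$, with (1) $x_{v,a}=\Pr[\mathcal{D}_v(p_v,\mathcal{I})=a]$ for all $a\in A\cup\{\emptyset\}$; (2) $s\,x_{v,a}\le y_a$ for all $a\in A$, and $p_{v,a}=0$ whenever $s\,x_{v,a}<y_a$; (3) $y$ maximizes $\sum_a(\sum_v p_{v,a})z_a$ over $z\in[0,1]^A$ with $\sum_a z_a=B$. The boundary candidate of $v$ is $a_v=$ the $\succ_v$-maximal element of $\{a\in A\cup\{\emptyset\}: p_{v,a}\le1-\varepsilon\}$. A voter $v$ is $t$-covered by $C$ if $|\{c\in C: c\succ_v a_v\}|\ge t$. *)

(* Defs.v *)
From HB Require Import structures.
From mathcomp Require Import all_boot all_order all_algebra.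
From mathcomp Require Import all_classical all_reals all_analysis.
From mathcomp Require Import uniform_distribution.
Set Implicit Arguments. Unset Strict Implicit. Unset Printing Implicit Defensive.
Import Order.TTheory GRing.Theory Num.Theory.

Local Open Scope ring_scope.

Definition strict_linear_order (T : finType) (r : rel T) : Prop :=
  irreflexive r /\ transitive r /\ (forall a b, a != b -> r a b || r b a).

(* A ∪ {∅} is modelled by [option A], with [None] = ∅.
   Extension of a voter's order: ∅ strictly below every candidate. *)
Definition prefE (A : finType) (pref : rel A) : rel (option A) :=
  fun o o' => match o, o' with
              | Some a, Some b => pref a b
              | Some _, None => true
              | None, _ => false
              end.

(* Demand: the ≻-maximal element of {o : pv o <= b} (∅ if no such maximum
   exists, which cannot happen when pref is a strict linear order,
   pv None = 0 and b >= 0). *)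
Definition demand (R : realType) (A : finType) (pref : rel A)
  (pv : option A -> R) (b : R) : option A :=
  odflt None [pick o | (pv o <= b) &&
     [forall o', (pv o' <= b) ==> ((o' == o) || prefE pref o o')]].

(* C ≻^t a  iff  |{c ∈ C : c ≻ a}| >= t.  (a ≻^t C is its negation.) *)
Definition tbeats (A : finType) (pref : rel A) (t : nat) (C : {set A}) (a : A)
  : bool := (t <= #|[set c in C | pref c a]|)%N.

Definition boundary (R : realType) (A : finType) (pref : rel A)
  (pv : option A -> R) (eps : R) : option A := demand pref pv (1 - eps).

Definition t_covered (R : realType) (A : finType) (pref : rel A)
  (pv : option A -> R) (eps : R) (t : nat) (C : {set A}) : bool :=
  (t <= #|[set c in C | prefE pref (Some c) (boundary pref pv eps)]|)%N.

Lemma income_lt (R : realType) (eps : R) : 0 < eps -> 1 - eps < 1.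
Proof. by move=> h; rewrite ltrBlDr ltrDl. Qed.

Definition Income (R : realType) (eps : R) (h : 0 < eps) :=
  uniform_prob (income_lt h).

Definition is_SLEO (R : realType) (V A : finType) (pref : V -> rel A)
  (s B eps : R) (h : 0 < eps)
  (p : V -> option A -> R) (x : V -> option A -> R) (y : A -> R) : Prop :=
  0 < s /\ 0 < B /\
   ((forall v o, 0 <= p v o <= 1) /\ (forall v, p v None = 0)) /\
   ((forall v o, 0 <= x v o <= 1) /\ (forall a, 0 <= y a <= 1)) /\
   (forall v o, ((x v o)%:E =
        Income h [set b | demand (pref v) (p v) b == o]%classic)%E) /\
   ((forall v a, s * x v (Some a) <= y a) /\
    (forall v a, s * x v (Some a) < y a -> p v (Some a) = 0)) /\
   ((\sum_a y a = B) /\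
   (forall z : A -> R, (forall a, 0 <= z a <= 1) -> \sum_a z a = B ->
      \sum_a (\sum_v p v (Some a)) * z a <=
      \sum_a (\sum_v p v (Some a)) * y a)).

(* Main.v *)
Require Import Defs.
From HB Require Import structures.
From mathcomp Require Import all_boot all_order all_algebra.
From mathcomp Require Import all_classical all_reals all_analysis.
From mathcomp Require Import uniform_distribution measurable_realfun.
From mathcomp Require Import ring lra.
Import Order.TTheory GRing.Theory Num.Theory.
Local Open Scope ring_scope.

Lemma prefE_slo (A : finType) (pref : rel A) :
  strict_linear_order pref -> strict_linear_order (prefE pref).
Proof.
move=> [irr [tr tot]]; split; [|split].
- by case=> [a|] //=; apply: irr.
- move=> [b|] [a|] [c|] //=; exact: tr.
- move=> [a|] [b|] //= ab; apply: tot; by apply: contra ab => /eqP ->.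
Qed.

Lemma demand_le (R : realType) (A : finType) (pref : rel A)
  (pv : option A -> R) b :
  pv None = 0 -> 0 <= b -> pv (demand pref pv b) <= b.
Proof.
move=> h0 hb; rewrite /demand; case: pickP => [ o /andP[ho _]|? ] //=.
by rewrite h0.
Qed.

Lemma demand_max (R : realType) (A : finType) (pref : rel A)
  (pv : option A -> R) b :
  strict_linear_order pref -> pv None = 0 -> 0 <= b ->
  forall o', pv o' <= b -> (o' == demand pref pv b) || prefE pref (demand pref pv b) o'.
Proof.
move=> /prefE_slo [irr [tr tot]] h0 hb.
set P := fun o => pv o <= b.
have PN : P None by rewrite /P h0.
case: (arg_maxnP (fun o => #|[set o'' | prefE pref o o'']|) PN) => o Po omax.
have key : [forall o', (pv o' <= b) ==> ((o' == o) || prefE pref o o')].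
  apply/forallP => o'; apply/implyP => Po'.
  case: (eqVneq o' o) => //= ne.
  have /orP[h|//] := tot _ _ ne.
  suff : (#|[set o'' | prefE pref o o'']| < #|[set o'' | prefE pref o' o'']|)%N.
    by move=> lt; have := omax o' Po'; rewrite /= leqNgt lt.
  apply: proper_card; apply/properP; split.
    apply/fintype.subsetP => z; rewrite !inE => hz; exact: tr h hz.
  by exists o; rewrite !inE ?irr // h.
rewrite /demand; case: pickP => [ o1 /andP[_ /forallP h1]|/(_ o)]; last first.
  by rewrite /= key andbT; move: Po; rewrite /P => ->.
move=> o' Po'; have := implyP (h1 o') Po'; by [].
Qed.

Lemma demand_meas (R : realType) (A : finType) (pref : rel A)
  (pv : option A -> R) (o : option A) :
  measurable [set b : R | demand pref pv b == o].
Proof.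
pose G (k : {ffun option A -> bool}) := odflt None [pick o0 | k o0 &&
   [forall o', k o' ==> ((o' == o0) || prefE pref o0 o')]].
have eD : forall b, demand pref pv b = G [ffun o' => pv o' <= b].
  move=> b; rewrite /demand /G; congr odflt; apply: eq_pick => o0 /=.
  rewrite ffunE; congr andb; apply: eq_forallb => o'; by rewrite ffunE.
have -> : ([set b : R | demand pref pv b == o] =
   \bigcup_(k in [set k | G k == o])
      \bigcap_(o' in [set: option A]) [set b : R | (pv o' <= b) = k o'])%classic.
  apply/seteqP; split => b /=.
  - move=> hb; exists [ffun o' => pv o' <= b]; first by rewrite /= -eD.
    by move=> o' _ /=; rewrite ffunE.
  - case=> k /= hk hall; rewrite eD.
    have -> : [ffun o' => pv o' <= b] = k; last by [].
    by apply/ffunP => o'; rewrite ffunE; apply: hall.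
apply: fin_bigcup_measurable; first exact: finite_finset.
move=> k _; apply: fin_bigcap_measurable; first exact: finite_finset.
have mle : forall o', measurable [set b : R | pv o' <= b]%classic.
  move=> o'; have := measurable_fun_le (D:=setT) measurableT
     (measurable_cst (pv o')) (@measurable_id _ R setT).
  by rewrite setTI.
move=> o' _; case: (k o'); first exact: mle.
have -> : ([set b : R | (pv o' <= b) = false] = ~` [set b | pv o' <= b])%classic.
  by apply/seteqP; split => b /=; case: (pv o' <= b).
apply: measurableC; exact: mle.
Qed.

Local Open Scope ereal_scope.

Lemma int_id_eq (R : realType) (eps : R) (h : (0 < eps)%R) :
  (eps <= 1)%R ->
  \int[Income h]_b (b%:E) =
  ((1 - (1 - eps))^-1)%R%:E * \int[lebesgue_measure]_(x in `[(1 - eps)%R, 1%R]%classic) x%:E.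
Proof.
move=> he1.
have mid : measurable_fun [set: R] (@EFin R).
  by apply/measurable_EFinP; exact: measurable_id.
rewrite integralE /Income.
rewrite (@integral_uniform _ _ _ _ ((fun b : R => b%:E)^\+)); last 2 first.
  exact: measurable_realfun.measurable_funepos.
  by move=> x; exact: funepos_ge0.
rewrite (@integral_uniform _ _ _ _ ((fun b : R => b%:E)^\-)); last 2 first.
  exact: measurable_realfun.measurable_funeneg.
  by move=> x; exact: funeneg_ge0.
have I0 : forall x, `[(1 - eps)%R, 1%R]%classic x -> (0 <= (x : R)%:E).
  move=> x /=; rewrite in_itv /= => /andP[hx _]; rewrite lee_fin.
  apply: le_trans hx; by rewrite subr_ge0.
rewrite [X in _ - _ * X]integral0_eq; last first.
  move=> x hx; apply: (ge0_funenegE I0); exact: mem_set.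
rewrite mule0 sube0; congr (_ * _); apply: eq_integral => x hx.
apply: (ge0_funeposE I0); exact: hx.
Qed.

Lemma int_bounds (R : realType) (eps : R) (h : (0 < eps)%R) :
  (eps <= 1)%R ->
  0 <= \int[Income h]_b (b%:E) <= 1.
Proof.
move=> he1; rewrite int_id_eq //.
have e0 : (0 <= (1 - (1 - eps))^-1)%R by rewrite subKr invr_ge0 ltW.
have I0 : forall x, `[(1 - eps)%R, 1%R]%classic x -> (0 <= (x : R)%:E).
  move=> x /=; rewrite in_itv /= => /andP[hx _]; rewrite lee_fin.
  apply: le_trans hx; by rewrite subr_ge0.
apply/andP; split.
  by apply: mule_ge0; [rewrite lee_fin | apply: integral_ge0].
have one : \int[Income h]_b (cst (1 : \bar R) b) = (1 : \bar R).
  rewrite integral_cst // mul1e; exact: (@probability_setT _ _ _ (uniform_prob (income_lt h))).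
rewrite -[X in _ <= X]one /Income integral_uniform //.
apply: lee_wpmul2l; first by rewrite lee_fin.
apply: ge0_le_integral => //.
- by move=> x /=; rewrite in_itv /= => /andP[_ hx]; rewrite lee_fin.
Qed.

Lemma spend (R : realType) (A : finType) (pref : rel A) (eps : R)
  (h : (0 < eps)%R) (pv : option A -> R) :
  (eps <= 1)%R -> pv None = 0%R -> (forall o, 0 <= pv o)%R ->
  \sum_(a : A) (pv (Some a))%:E * Income h [set b | demand pref pv b == Some a]%classic
    <= \int[Income h]_b (b%:E).
Proof.
move=> he1 h0 hp.
set E := fun a => [set b : R | demand pref pv b == Some a]%classic.
have mE a : measurable (E a) := @demand_meas R A pref pv (Some a).
have mt : forall a, measurable_fun [set: R] (fun b => (pv (Some a) * \1_(E a) b)%:E).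
  move=> a; apply/measurable_EFinP; apply: measurable_funM => //.
have t0 : forall a (b : R), 0 <= (pv (Some a) * \1_(E a) b)%:E.
  by move=> a b; rewrite lee_fin mulr_ge0.
have -> : \sum_(a : A) (pv (Some a))%:E * Income h (E a) =
    \int[Income h]_b (\sum_(a : A) (pv (Some a) * \1_(E a) b)%:E).
  rewrite ge0_integral_sum //.
  apply: eq_bigr => a _.
  under eq_integral do rewrite EFinM.
  rewrite ge0_integralZl //. all: try by rewrite lee_fin.
  rewrite integral_indic // ?classical_sets.setIT //; first exact: mE.
  by apply/measurable_EFinP; apply: measurable_indic; exact: mE.
rewrite int_id_eq // /Income integral_uniform //; last first.
- by move=> b; apply: sume_ge0 => a _; exact: t0.
- exact: emeasurable_sum.
apply: lee_wpmul2l; first by rewrite lee_fin subKr invr_ge0 ltW.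
apply: ge0_le_integral => //.
- by move=> b _; apply: sume_ge0 => a _; exact: t0.
- apply: emeasurable_sum => a; apply: measurable_funTS.
  apply/measurable_EFinP; apply: measurable_funM => //; apply: measurable_indic; exact: mE.
move=> b /=; rewrite in_itv /= => /andP[hb _].
have b0 : (0 <= b)%R by apply: le_trans hb; rewrite subr_ge0.
rewrite sumEFin lee_fin.
have -> : (\sum_a pv (Some a) * \1_(E a) b = pv (demand pref pv b))%R.
  case eq: (demand pref pv b) => [a0|].
    rewrite (bigD1 a0) //= big1 ?addr0.
      by rewrite indicE mem_set ?mulr1 //= /E /= eq.
    move=> a ne; rewrite indicE memNset ?mulr0 //= /E /= eq.
    by apply/negP; rewrite /= eq_sym.
  rewrite h0 big1 // => a _; rewrite indicE memNset ?mulr0 //= /E /= eq.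
  by [].
exact: demand_le.
Qed.

Local Close Scope ereal_scope.

Lemma sum_if1 (A : finType) (R : realType) (f : A -> R) (c : A) (d : R) :
  \sum_a f a * (if a == c then d else 0) = f c * d.
Proof.
rewrite (eq_bigr (fun a => if a == c then f a * d else 0)).
  by rewrite -big_mkcond big_pred1_eq.
by move=> a _; case: ifP; rewrite ?mulr0.
Qed.

Theorem mainTheorem11 (R : realType) (V A : finType) (pref : V -> rel A)
  (gamma : R) (t : nat) (eps B : R) (heps : 0 < eps)
  (p : V -> option A -> R) (x : V -> option A -> R) (y : A -> R)
  (C : {set A}) :
  (0 < #|V|)%N ->
  (forall v, strict_linear_order (pref v)) ->
  1 <= gamma -> (1 <= t)%N -> eps < 1 ->
  gamma * t%:R <= B -> B <= #|A|%:R ->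
  is_SLEO pref (gamma * t%:R) B heps p x y ->
  (t <= #|C|)%N -> (forall a, y a = 1 -> a \in C) ->
  forall c, c \notin C ->
    ((\sum_v p v (Some c))%:E <=
       (gamma * t%:R * #|V|%:R / B)%:E * \int[Income heps]_b b%:E)%E /\
    #|[set v | t_covered (pref v) (p v) eps t C && ~~ tbeats (pref v) t C c]|%:R
      <= gamma * t%:R / (B * (1 - eps)) * #|V|%:R.
Proof.
move=> V0 slo g1 t1 e1 gB BA [s0 [B0 [[hp hpN] [[hx hy] [hxD [[hsx hsxp] [hsum hopt]]]]]]] tC hyC c cC.
set s := gamma * t%:R in s0 hsx hsxp *.
have e1' : eps <= 1 := ltW e1.
have [J0 J1] := andP (@int_bounds R eps heps e1').
set J := (\int[Income heps]_b (b%:E))%E in J0 J1 *.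
have Jfin : J = (fine J)%:E.
  by rewrite fineK // ge0_fin_numE // (le_lt_trans J1) // ltry.
set j := fine J in Jfin.
have j1 : j <= 1 by rewrite -lee_fin -Jfin.
have j0 : 0 <= j by rewrite -lee_fin -Jfin.
have hp0 : forall v o, 0 <= p v o by move=> v o; case/andP: (hp v o).
have spv : forall v, \sum_a p v (Some a) * x v (Some a) <= j.
  move=> v; rewrite -lee_fin -Jfin -sumEFin.
  rewrite (eq_bigr (fun a => ((p v (Some a))%:E *
     Income heps [set b | demand (pref v) (p v) b == Some a]%classic)%E)).
    exact: (@spend R A (pref v) eps heps (p v) e1' (hpN v) (hp0 v)).
  by move=> a _; rewrite EFinM hxD.
set P := fun a => \sum_v p v (Some a).
have yc1 : y c < 1.
  have /andP[_ yc] := hy c; rewrite lt_neqAle yc andbT.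
  by apply/eqP => e; move: cC; rewrite hyC.
have key : forall a, 0 < y a -> P c <= P a.
  move=> a ya; case: (eqVneq a c) => [->//|ne].
  set d := Order.min (y a) (1 - y c).
  have d0 : 0 < d by rewrite lt_min ya subr_gt0 yc1.
  have dya : d <= y a by rewrite /d ge_min lexx.
  have dyc : d <= 1 - y c by rewrite /d ge_min lexx orbT.
  pose z a' := y a' + (if a' == c then d else 0) - (if a' == a then d else 0).
  have hz : forall a', 0 <= z a' <= 1.
    move=> a'; have /andP[ya0 ya1] := hy a'; rewrite /z.
    have /andP[yc0 _] := hy c.
    case: (eqVneq a' c) => [e|nc].
    - subst a'; rewrite eq_sym (negbTE ne) subr0; apply/andP; split; lra.
    - case: (eqVneq a' a) => [e|na].
      + subst a'; apply/andP; split; lra.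
      + by rewrite addr0 subr0 ya0 ya1.
  have sz : \sum_a' z a' = B.
    rewrite /z sumrB big_split /= hsum.
    have E1 : forall e : A, \sum_a' (if a' == e then d else 0) = d.
      by move=> e; rewrite -big_mkcond big_pred1_eq.
    by rewrite !E1 addrK.
  have := hopt z hz sz.
  have -> : \sum_a0 (\sum_v p v (Some a0)) * z a0 =
      (\sum_a0 (\sum_v p v (Some a0)) * y a0) + P c * d - P a * d.
    rewrite /z; under eq_bigr do rewrite mulrBr mulrDr.
    by rewrite sumrB big_split /= !(@sum_if1 A R (fun a0 => \sum_v p v (Some a0))).
  move=> hle.
  have : P c * d <= P a * d by lra.
  by rewrite ler_pM2r.
have PcB : P c * B <= s * (#|V|%:R * j).
  rewrite -hsum mulr_sumr.
  apply: (@le_trans _ _ (\sum_a P a * y a)).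
    apply: ler_sum => a _; have /andP[ya0 _] := hy a.
    rewrite le_eqVlt in ya0; case/orP: ya0 => [/eqP<-|ya].
      by rewrite !mulr0.
    by rewrite -subr_ge0 -mulrBl; apply: mulr_ge0; [rewrite subr_ge0; exact: key | exact: ltW].
  have -> : \sum_a P a * y a = s * \sum_v \sum_a p v (Some a) * x v (Some a).
    rewrite /P; under eq_bigr do rewrite mulr_suml.
    rewrite exchange_big /= mulr_sumr; apply: eq_bigr => v _.
    rewrite mulr_sumr; apply: eq_bigr => a _.
    case: (ltrP (s * x v (Some a)) (y a)) => hh.
      by rewrite (hsxp v a hh) !mul0r mulr0.
    have -> : y a = s * x v (Some a) by apply/le_anti; rewrite hh hsx.
    by rewrite mulrCA.
  apply: ler_wpM2l; first exact: ltW.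
  apply: (@le_trans _ _ (\sum_(v : V) j)); first by apply: ler_sum => v _; exact: spv.
  by rewrite sumr_const mulr_natl.
have Pcle : P c <= s * #|V|%:R / B.
  rewrite ler_pdivlMr //; apply: le_trans PcB _.
  have hn : 0 <= #|V|%:R :> R := ler0n _ _.
  have nj : #|V|%:R * j <= #|V|%:R.
    rewrite -subr_ge0 -[X in X - _]mulr1 -mulrBr; apply: mulr_ge0 => //.
    by rewrite subr_ge0.
  rewrite -subr_ge0 -mulrBr; apply: mulr_ge0; first exact: ltW.
  by rewrite subr_ge0.
split.
  rewrite Jfin -EFinM lee_fin.
  have -> : s * #|V|%:R / B * j = s * (#|V|%:R * j) / B by rewrite mulrAC !mulrA.
  by rewrite ler_pdivlMr.
set S := [set v | _].
have Sb : forall v, v \in S -> 1 - eps < p v (Some c).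
  move=> v; rewrite inE => /andP[cov ntb].
  have [irr [tr tot]] := @prefE_slo A (pref v) (slo v).
  have b0 : 0 <= 1 - eps by rewrite subr_ge0.
  have mx := @demand_max R A (pref v) (p v) (1 - eps) (slo v) (hpN v) b0.
  move: cov; rewrite /t_covered /boundary; set av := demand _ _ (1 - eps) => cov.
  have cav : prefE (pref v) (Some c) av.
    apply: contraNT ntb => ncav.
    rewrite /tbeats; apply: leq_trans cov _.
    apply: subset_leq_card; apply/fintype.subsetP => z; rewrite !inE.
    case/andP=> [zC zav]; rewrite zC /=.
    case: (eqVneq av (Some c)) => [e|ne].
      by move: zav; rewrite e.
    have /orP[hh|hh] := tot _ _ ne.
      exact: (tr _ (Some z) (Some c) zav hh).
    by move: ncav; rewrite hh.
  rewrite ltNge; apply/negP => pc.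
  have /orP[/eqP e|hh] := mx _ pc.
    by move: cav; rewrite /av -e irr.
  by move: (tr _ _ _ hh cav); rewrite irr.
have hS : #|S|%:R * (1 - eps) <= P c.
  apply: (@le_trans _ _ (\sum_(v in S) p v (Some c))).
    rewrite mulr_natl -sumr_const.
    by apply: ler_sum => v vS; exact: ltW (Sb v vS).
  rewrite /P [X in _ <= X](bigID (fun v => v \in S)) /= lerDl.
  by apply: sumr_ge0 => v _.
have ep : 0 < 1 - eps by rewrite subr_gt0.
have -> : s / (B * (1 - eps)) * #|V|%:R = (s * #|V|%:R / B) / (1 - eps).
  by field; rewrite ?gt_eqF.
rewrite ler_pdivlMr //; exact: le_trans hS Pcle.
Qed.
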